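(* For every integer $m\geq 3$ there exists a connected cubic graph $G$ of order $2n$ such that every edge of $G$ is contained in at least one $[n-1]$-matching of $G$ (so $\chi'_{[n-1]}(G)$ is finite) and $\chi'_{[n-1]}(G)\geq m$.
   Context: All graphs are finite, simple (no loops, no parallel edges), connected and cubic (3-regular). For a positive integer $k$, a $[k]$-matching of $G$ is a matching of $G$ with exactly $k$ edges. The excessive $[k]$-index $\chi'_{[k]}(G)$ is the minimum number of $[k]$-matchings of $G$ whose union is $E(G)$; if some edge of $G$ lies in no $[k]$-matching, one sets $\chi'_{[k]}(G)=\infty$. *)

(* Defs.v *)
(* A simple graph on a finite vertex type T is a symmetric,
   irreflexive relation e : rel T. Edges are 2-element vertex sets {x,y}. *)
From mathcomp Require Import all_boot.
Set Implicit Arguments.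
Unset Strict Implicit.
Unset Printing Implicit Defensive.

Section Graphs.
Variable T : finType.
Variable e : rel T.

Definition simple_graph : Prop := symmetric e /\ irreflexive e.

Definition edges : {set {set T}} :=
  [set s : {set T} | [exists x : T, exists y : T, e x y && (s == [set x; y])]].

Definition cubic : Prop := forall x : T, #|[set y | e x y]| = 3.

Definition connected_graph : Prop := forall x y : T, connect e x y.

Definition matching (M : {set {set T}}) : Prop :=
  M \subset edges /\ trivIset M.

Definition kmatching (k : nat) (M : {set {set T}}) : Prop :=
  matching M /\ #|M| = k.

(* every edge lies in some [k]-matching (i.e. chi'_[k](G) is finite) *)
Definition every_edge_in_kmatching (k : nat) : Prop :=
  forall s, s \in edges -> exists M, kmatching k M /\ s \in M.

(* chi'_[k](G) >= m : every family of [k]-matchings whose union is E(G)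
   has at least m members *)
Definition excessive_index_ge (k m : nat) : Prop :=
  forall F : {set {set {set T}}},
    (forall M, M \in F -> kmatching k M) ->
    \bigcup_(M in F) M = edges ->
    m <= #|F|.
End Graphs.

(* Main.v *)
From HB Require Import structures.
Require Import Defs.
From mathcomp Require Import all_boot zify.
Set Implicit Arguments. Unset Strict Implicit. Unset Printing Implicit Defensive.

Inductive V : Type := U | Vv | Aa | Bb | Cc | Dd.
Definition encV (v : V) : nat := match v with U => 0 | Vv => 1 | Aa => 2 | Bb => 3 | Cc => 4 | Dd => 5 end.
Definition decV (n : nat) : option V := match n with 0 => Some U | 1 => Some Vv | 2 => Some Aa | 3 => Some Bb | 4 => Some Cc | 5 => Some Dd | _ => None end.
Lemma encVK : pcancel encV decV. Proof. by case. Qed.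
HB.instance Definition _ := Countable.copy V (pcan_type encVK).
Definition Venum := [:: U; Vv; Aa; Bb; Cc; Dd].
Lemma Venum_ax : Finite.axiom Venum. Proof. by case. Qed.
HB.instance Definition _ := isFinite.Build V Venum_ax.
Lemma card_V : #|{: V}| = 6. Proof. by rewrite cardT enumT unlock. Qed.

Definition locn (p q : V) : bool := match p, q with
 | U, Vv | Vv, U | Vv, Aa | Aa, Vv | Vv, Bb | Bb, Vv | Aa, Cc | Cc, Aa
 | Aa, Dd | Dd, Aa | Bb, Cc | Cc, Bb | Bb, Dd | Dd, Bb | Cc, Dd | Dd, Cc => true
 | _, _ => false end.
Lemma locn_sym p q : locn p q = locn q p. Proof. by case: p; case: q. Qed.

Section G.
Variable k : nat.
Notation K := k.+3.
Definition T := ('I_K * V)%type.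
Definition ee (x y : T) : bool :=
  ((x.1 == y.1) && locn x.2 y.2) ||
  ((x.2 == U) && (y.2 == U) && ((y.1 == ordS x.1) || (x.1 == ordS y.1))).

Lemma valS (i : 'I_K) : val (ordS i) = i.+1 %% K. Proof. by []. Qed.

Lemma ordS_neq (i : 'I_K) : ordS i != i.
Proof.
apply/eqP => /(congr1 val); rewrite valS.
have := ltn_ord i; rewrite leq_eqVlt => /orP[/eqP H| H].
  by rewrite H modnn => H0; move: H; rewrite -H0.
by rewrite /= modn_small // => H0; lia.
Qed.

Lemma ordSS_neq (i : 'I_K) : ordS (ordS i) != i.
Proof.
apply/eqP => /(congr1 val); rewrite !valS.
have := ltn_ord i; rewrite leq_eqVlt => /orP[/eqP H| H].
  by rewrite H modnn modn_small // => H0; move: H; rewrite -H0.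
rewrite (modn_small H).
move: H; rewrite leq_eqVlt => /orP[/eqP H| H].
  by rewrite H modnn => H0; move: H; rewrite -H0.
by rewrite /= modn_small // => H0; lia.
Qed.

Lemma ee_sym : symmetric ee.
Proof.
move=> [i p] [j q]; rewrite /ee /= [j == i]eq_sym locn_sym; congr (_ || _).
by rewrite [(q == U) && _]andbC orbC.
Qed.

Lemma ee_irr : irreflexive ee.
Proof.
move=> [i p]; rewrite /ee /= eqxx /= orbb [i == _]eq_sym (negbTE (ordS_neq i)) andbF orbF.
by case: p.
Qed.

Lemma card3 (a b c : T) : a != b -> a != c -> b != c -> #|[set a; b; c]| = 3.
Proof.
move=> ab ac bc; rewrite -setUA cardsU1 cards2 bc !inE negb_or ab ac.
by [].
Qed.

Lemma cubic_ee : cubic ee.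
Proof.
move=> [i p]; case: (p =P U) => [->|pU].
  have -> : [set y | ee (i, U) y] = [set (i, Vv); (ordS i, U); (ord_pred i, U)].
    apply/setP => [[j q]]; rewrite !inE /ee /= !xpair_eqE.
    have -> : (i == ordS j) = (j == ord_pred i).
      by rewrite -(inj_eq (@ord_pred_inj _)) ordSK eq_sym.
    by case: q => /=; rewrite ?andbF ?andbT ?orbF ?[i == j]eq_sym.
  apply: card3; rewrite ?xpair_eqE ?andbF ?andbT //.
  apply/eqP => H; move: (ordSS_neq i); by rewrite H ord_predK eqxx.
have -> : [set y | ee (i, p) y] = [set y | (y.1 == i) && locn p y.2].
  apply/setP => [[j q]]; rewrite !inE /ee /= eq_sym.
  by case: p pU => //= _; rewrite orbF.
case: p pU => // _.
- have -> : [set y | (y.1 == i) && locn Vv y.2] = [set (i, U); (i, Aa); (i, Bb)].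
    by apply/setP => [[j q]]; rewrite !inE !xpair_eqE /=; case: q; rewrite ?andbT ?andbF ?orbF.
  by apply: card3; rewrite ?xpair_eqE ?eqxx ?andbF ?andbT.
- have -> : [set y | (y.1 == i) && locn Aa y.2] = [set (i, Vv); (i, Cc); (i, Dd)].
    by apply/setP => [[j q]]; rewrite !inE !xpair_eqE /=; case: q; rewrite ?andbT ?andbF ?orbF.
  by apply: card3; rewrite ?xpair_eqE ?eqxx ?andbF ?andbT.
- have -> : [set y | (y.1 == i) && locn Bb y.2] = [set (i, Vv); (i, Cc); (i, Dd)].
    by apply/setP => [[j q]]; rewrite !inE !xpair_eqE /=; case: q; rewrite ?andbT ?andbF ?orbF.
  by apply: card3; rewrite ?xpair_eqE ?eqxx ?andbF ?andbT.
- have -> : [set y | (y.1 == i) && locn Cc y.2] = [set (i, Aa); (i, Bb); (i, Dd)].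
    by apply/setP => [[j q]]; rewrite !inE !xpair_eqE /=; case: q; rewrite ?andbT ?andbF ?orbF.
  by apply: card3; rewrite ?xpair_eqE ?eqxx ?andbF ?andbT.
- have -> : [set y | (y.1 == i) && locn Dd y.2] = [set (i, Aa); (i, Bb); (i, Cc)].
    by apply/setP => [[j q]]; rewrite !inE !xpair_eqE /=; case: q; rewrite ?andbT ?andbF ?orbF.
  by apply: card3; rewrite ?xpair_eqE ?eqxx ?andbF ?andbT.
Qed.

Lemma conn_base (x : T) : connect ee x (ord0, U).
Proof.
have step : forall y z, ee y z -> connect ee z (ord0, U) -> connect ee y (ord0, U).
  by move=> y z yz; apply: connect_trans; apply: connect1.
have cyc : forall n (i : 'I_K), val i = n -> connect ee (i, U) (ord0, U).
  elim=> [|n IH] i hi.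
    by have -> : i = ord0 by apply: val_inj.
  apply: (step _ (ord_pred i, U)).
    by rewrite /ee /= ord_predK eqxx !orbT.
  apply: IH => /=; rewrite hi addSn /= -modnDmr modnn addn0 modn_small //.
  by have := ltn_ord i; rewrite hi; lia.
case: x => i p; case: p.
- exact: (cyc (val i) i erefl).
- by apply: (step _ (i, U)); [rewrite /ee /= eqxx|apply: (cyc (val i) i erefl)].
- apply: (step _ (i, Vv)); first by rewrite /ee /= eqxx.
  by apply: (step _ (i, U)); [rewrite /ee /= eqxx|apply: (cyc (val i) i erefl)].
- apply: (step _ (i, Vv)); first by rewrite /ee /= eqxx.
  by apply: (step _ (i, U)); [rewrite /ee /= eqxx|apply: (cyc (val i) i erefl)].
- apply: (step _ (i, Aa)); first by rewrite /ee /= eqxx.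
  apply: (step _ (i, Vv)); first by rewrite /ee /= eqxx.
  by apply: (step _ (i, U)); [rewrite /ee /= eqxx|apply: (cyc (val i) i erefl)].
- apply: (step _ (i, Aa)); first by rewrite /ee /= eqxx.
  apply: (step _ (i, Vv)); first by rewrite /ee /= eqxx.
  by apply: (step _ (i, U)); [rewrite /ee /= eqxx|apply: (cyc (val i) i erefl)].
Qed.

Lemma conn_ee : connected_graph ee.
Proof.
move=> x y; apply: (connect_trans (conn_base x)).
by rewrite (sym_connect_sym ee_sym); apply: conn_base.
Qed.

Lemma edge_mem (B : {set T}) v : B \in edges ee -> v \in B ->
  exists z, ee v z /\ B = [set v; z].
Proof.
rewrite inE => /existsP[x /existsP[y /andP[hxy /eqP ->]]].
rewrite !inE => /orP[/eqP ->|/eqP ->]; first by exists y.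
by exists x; rewrite ee_sym setUC.
Qed.

Lemma card_edge (B : {set T}) : B \in edges ee -> #|B| = 2.
Proof.
rewrite inE => /existsP[x /existsP[y /andP[hxy /eqP ->]]].
rewrite cards2; case: (x =P y) hxy => [->|//]; by rewrite ee_irr.
Qed.

Definition Mf (f : T -> T) : {set {set T}} := [set [set x; f x] | x in [set x | f x != x]].

Definition good (f : T -> T) (a b : T) :=
  [/\ involutive f, (forall x, f x != x -> ee x (f x)), a != b &
      (forall x, (f x == x) = (x == a) || (x == b))].

Lemma card_T : #|{: T}| = K * 6.
Proof. by rewrite card_prod card_ord card_V. Qed.

Lemma Mf_kmatch f a b : good f a b -> kmatching ee (3 * K).-1 (Mf f).
Proof.
case=> fK fe ab ffix.
have sub : Mf f \subset edges ee.
  apply/subsetP => B /imsetP[x]; rewrite inE => hx ->; rewrite inE.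
  by apply/existsP; exists x; apply/existsP; exists (f x); rewrite eqxx andbT fe.
have cov : cover (Mf f) = [set x | f x != x].
  apply/setP => y; apply/bigcupP/idP.
    move=> [B /imsetP[x hx ->]]; move: hx; rewrite !inE => hx /orP[/eqP->|/eqP->] //.
    by rewrite fK eq_sym.
  by move=> hy; exists [set y; f y]; [apply: imset_f | rewrite !inE eqxx].
have pairf : forall z x, (z == x) || (z == f x) -> [set x; f x] = [set z; f z].
  move=> z x /orP[/eqP->//|/eqP->]; by rewrite fK setUC.
have triv : trivIset (Mf f).
  apply/trivIsetP => A B /imsetP[x hx ->] /imsetP[y hy ->] hne.
  rewrite -setI_eq0; apply/eqP/setP => z; rewrite !inE.
  apply/negbTE; apply: contra hne => /andP[h1 h2].
  by rewrite (pairf z x h1) (pairf z y h2).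
split; first by split.
have := triv; rewrite /trivIset => /eqP.
have -> : \sum_(B in Mf f) #|B| = \sum_(B in Mf f) 2.
  by apply: eq_bigr => B hB; apply: card_edge; apply: (subsetP sub).
rewrite sum_nat_const cov.
have -> : [set x | f x != x] = ~: [set a; b].
  by apply/setP => x; rewrite !inE ffix negb_or.
have := cardsC [set a; b]; rewrite cards2 ab card_T /= => H1 H2.
rewrite -H2 in H1; move: H1; rewrite mulnC; move: (#|Mf f|) => c H; clear -H; lia.
Qed.

Lemma Mf_mem f x : f x != x -> [set x; f x] \in Mf f.
Proof. by move=> h; apply: imset_f; rewrite inE. Qed.

Definition P0 (r : V) : V := match r with U => Vv | Vv => U | Aa => Cc | Cc => Aa | Bb => Dd | Dd => Bb end.
Definition fs (L : V -> V) (i : 'I_K) (x : T) : T := (x.1, if x.1 == i then L x.2 else P0 x.2).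

Lemma fs_good L i q1 q2 : involutive L -> (forall r, L r != r -> locn r (L r)) ->
  q1 != q2 -> (forall r, (L r == r) = (r == q1) || (r == q2)) ->
  good (fs L i) (i, q1) (i, q2).
Proof.
move=> LK Le q12 Lfix; split.
- move=> [j r]; rewrite /fs /=; case: (j =P i) => _; first by rewrite LK.
  by case: r.
- move=> [j r]; rewrite /fs /ee /= eqxx /=; case: (j =P i) => _ h.
    by apply/orP; left; apply: Le; apply: contra h => /eqP ->.
  by case: r h.
- by rewrite xpair_eqE eqxx.
- move=> [j r]; rewrite /fs /= !xpair_eqE eqxx /=; case: (j =P i) => _ /=.
    by rewrite Lfix.
  by case: r.
Qed.

Definition L1 r := match r with U => Vv | Vv => U | Aa => Cc | Cc => Aa | Bb => Bb | Dd => Dd end.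
Definition L2 r := match r with U => Vv | Vv => U | Aa => Dd | Dd => Aa | Bb => Bb | Cc => Cc end.
Definition L3 r := match r with U => Vv | Vv => U | Bb => Dd | Dd => Bb | Aa => Aa | Cc => Cc end.
Definition L4 r := match r with U => Vv | Vv => U | Bb => Cc | Cc => Bb | Aa => Aa | Dd => Dd end.
Definition LA r := match r with Vv => Aa | Aa => Vv | Bb => Dd | Dd => Bb | U => U | Cc => Cc end.
Definition LB r := match r with Vv => Bb | Bb => Vv | Aa => Dd | Dd => Aa | U => U | Cc => Cc end.
Definition LC r := match r with Vv => Aa | Aa => Vv | Cc => Dd | Dd => Cc | U => U | Bb => Bb end.

Definition fc (i : 'I_K) (x : T) : T :=
  if x.2 == U then
    (if x.1 == i then (ordS i, U) else if x.1 == ordS i then (i, U) else (x.1, Vv))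
  else (x.1, if (x.1 == i) || (x.1 == ordS i) then LA x.2 else P0 x.2).

Lemma fc_good i : good (fc i) (i, Cc) (ordS i, Cc).
Proof.
have ni := ordS_neq i.
have ni' : (i == ordS i) = false by rewrite eq_sym (negbTE ni).
split.
- move=> [j r]; rewrite /fc /=.
  have [->|hi] := eqVneq j i.
    by rewrite ?eqxx; case: r => /=; rewrite ?eqxx ?(negbTE ni) ?ni'.
  have [->|hs] := eqVneq j (ordS i).
    by rewrite ?(negbTE ni) ?eqxx; case: r => /=; rewrite ?eqxx ?(negbTE ni) ?ni' ?orbT.
  by rewrite ?(negbTE hi) ?(negbTE hs); case: r => /=; rewrite ?(negbTE hi) ?(negbTE hs).
- move=> [j r]; rewrite /fc /=.
  have [->|hi] := eqVneq j i.
    rewrite ?eqxx; case: r => /=; rewrite /ee /= ?eqxx ?orbT //.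
  have [->|hs] := eqVneq j (ordS i).
    rewrite ?(negbTE ni) ?eqxx; case: r => /=; rewrite /ee /= ?eqxx ?orbT //.
  rewrite ?(negbTE hi) ?(negbTE hs); case: r => /=; rewrite /ee /= ?eqxx //.
- by rewrite xpair_eqE ni' andbT.
- move=> [j r]; rewrite /fc /= !xpair_eqE.
  have [->|hi] := eqVneq j i.
    by rewrite ?eqxx ?ni'; case: r => /=; rewrite ?xpair_eqE ?eqxx ?(negbTE ni) ?ni' ?(negbTE hi) ?(negbTE hs) ?andbT ?andbF ?orbT ?orbF.
  have [->|hs] := eqVneq j (ordS i).
    by rewrite ?(negbTE ni) ?eqxx; case: r => /=; rewrite ?xpair_eqE ?eqxx ?(negbTE ni) ?ni' ?(negbTE hi) ?(negbTE hs) ?andbT ?andbF ?orbT ?orbF.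
  by rewrite ?(negbTE hi) ?(negbTE hs); case: r => /=; rewrite ?xpair_eqE ?eqxx ?(negbTE ni) ?ni' ?(negbTE hi) ?(negbTE hs) ?andbT ?andbF ?orbT ?orbF.
Qed.

Lemma exists_good x y : ee x y -> exists f a b, good f a b /\ f x = y.
Proof.
case: x y => [i p] [j q]; rewrite /ee /= => /orP[/andP[/eqP <- hl]|/andP[/andP[/eqP -> /eqP ->] hc]].
  have G : forall L q1 q2 p q, involutive L -> (forall r, L r != r -> locn r (L r)) ->
      q1 != q2 -> (forall r, (L r == r) = (r == q1) || (r == q2)) -> L p = q ->
      exists f a b, good f a b /\ f (i, p) = (i, q).
    move=> L q1 q2 p' q' h1 h2 h3 h4 h5; exists (fs L i), (i, q1), (i, q2); split.
      exact: fs_good.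
    by rewrite /fs /= eqxx h5.
  clear -hl G.
  case: p q hl => [] [] // _.
  1-16: first [ (apply: (G L1 Bb Dd); by try case) | (apply: (G L2 Bb Cc); by try case)
             | (apply: (G L3 Aa Cc); by try case) | (apply: (G L4 Aa Dd); by try case)
             | (apply: (G LA U Cc); by try case) | (apply: (G LB U Cc); by try case)
             | (apply: (G LC U Bb); by try case) ].
case/orP: hc => /eqP ->.
  exists (fc i), (i, Cc), (ordS i, Cc); split; first exact: fc_good.
  by rewrite /fc /= eqxx.
exists (fc j), (j, Cc), (ordS j, Cc); split; first exact: fc_good.
by rewrite /fc /= (negbTE (ordS_neq j)) eqxx.
Qed.

Lemma every_edge : every_edge_in_kmatching ee (3 * K).-1.
Proof.
move=> s; rewrite inE => /existsP[x /existsP[y /andP[hxy /eqP ->]]].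
have [f [a [b [hg fx]]]] := exists_good hxy.
exists (Mf f); split; first exact: Mf_kmatch hg.
rewrite -fx; apply: Mf_mem; rewrite fx; apply: contraTneq hxy => ->.
by rewrite ee_irr.
Qed.

Lemma conflict (M : {set {set T}}) B1 B2 z : matching ee M -> B1 \in M -> B2 \in M ->
  B1 != B2 -> z \in B1 -> z \in B2 -> False.
Proof.
move=> [_ /trivIsetP tr] h1 h2 hne z1 z2.
by have := disjointFr (tr _ _ h1 h2 hne) z1; rewrite z2.
Qed.

Lemma partner (M : {set {set T}}) E0 t : matching ee M -> E0 \in M -> t \notin E0 ->
  t \in cover M -> exists2 z, ee t z /\ z \notin E0 & [set t; z] \in M.
Proof.
move=> hM h0 tE /bigcupP[B hB tB].
have [z [tz eB]] := edge_mem (subsetP hM.1 _ hB) tB.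
exists z; last by rewrite -eB.
split => //; apply/negP => zE.
apply: (conflict hM hB h0 _ (z := z)) => //; last by rewrite eB !inE eqxx orbT.
by apply/eqP => E; move: tB; rewrite E; apply/negP.
Qed.

Lemma tri (M : {set {set T}}) E0 t1 t2 t3 : matching ee M -> E0 \in M ->
  t1 \notin E0 -> t2 \notin E0 -> t3 \notin E0 -> t1 != t2 -> t1 != t3 -> t2 != t3 ->
  (forall z, ee t1 z -> z \notin E0 -> (z == t2) || (z == t3)) ->
  (forall z, ee t2 z -> z \notin E0 -> (z == t1) || (z == t3)) ->
  (forall z, ee t3 z -> z \notin E0 -> (z == t1) || (z == t2)) ->
  ~~ [&& t1 \in cover M, t2 \in cover M & t3 \in cover M].
Proof.
move=> hM h0 n1 n2 n3 d12 d13 d23 N1 N2 N3; apply/negP => /and3P[c1 c2 c3].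
have [z1 [e1 z1E] B1] := partner hM h0 n1 c1.
case/orP: (N1 _ e1 z1E) => /eqP ez1; subst z1.
- have [z3 [e3 z3E] B3] := partner hM h0 n3 c3.
  apply: (conflict hM B1 B3 (z := z3)).
  + apply/negP => /eqP E.
    have : t3 \in [set t1; t2] by rewrite E !inE eqxx.
    by rewrite !inE => /orP[/eqP h|/eqP h]; [rewrite h eqxx in d13 | rewrite h eqxx in d23].
  + by case/orP: (N3 _ e3 z3E) => /eqP ->; rewrite !inE eqxx ?orbT.
  + by rewrite !inE eqxx orbT.
- have [z2 [e2 z2E] B2] := partner hM h0 n2 c2.
  apply: (conflict hM B1 B2 (z := z2)).
  + apply/negP => /eqP E.
    have : t2 \in [set t1; t3] by rewrite E !inE eqxx.
    by rewrite !inE => /orP[/eqP h|/eqP h]; [rewrite h eqxx in d12 | rewrite h eqxx in d23].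
  + by case/orP: (N2 _ e2 z2E) => /eqP ->; rewrite !inE eqxx ?orbT.
  + by rewrite !inE eqxx orbT.
Qed.

Lemma uncov (M : {set {set T}}) i : matching ee M ->
  ([set (i, Vv); (i, Aa)] \in M) || ([set (i, Vv); (i, Bb)] \in M) ->
  exists x, x \notin cover M /\ x.1 = i.
Proof.
move=> hM /orP[h|h].
- have : ~~ [&& (i, Bb) \in cover M, (i, Cc) \in cover M & (i, Dd) \in cover M].
  { apply: (tri hM h); rewrite ?inE ?xpair_eqE ?eqxx //=.
    all: move=> [j q]; rewrite /ee /= !inE !xpair_eqE ?andbF ?orbF => /andP[/eqP <-]; case: q; rewrite ?eqxx //=. }
  by rewrite !negb_and => /or3P[hx|hx|hx]; eexists; (split; [exact: hx| by []]).
- have : ~~ [&& (i, Aa) \in cover M, (i, Cc) \in cover M & (i, Dd) \in cover M].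
  { apply: (tri hM h); rewrite ?inE ?xpair_eqE ?eqxx //=.
    all: move=> [j q]; rewrite /ee /= !inE !xpair_eqE ?andbF ?orbF => /andP[/eqP <-]; case: q; rewrite ?eqxx //=. }
  by rewrite !negb_and => /or3P[hx|hx|hx]; eexists; (split; [exact: hx| by []]).
Qed.

Definition S (M : {set {set T}}) : {set 'I_K} :=
  [set i | ([set (i, Vv); (i, Aa)] \in M) || ([set (i, Vv); (i, Bb)] \in M)].

Lemma card_S M : kmatching ee (3 * K).-1 M -> #|S M| <= 2.
Proof.
move=> [hM cM].
have cov2 : #|~: cover M| = 2.
  have := hM.2; rewrite /trivIset => /eqP.
  have -> : \sum_(B in M) #|B| = \sum_(B in M) 2.
    by apply: eq_bigr => B hB; apply: card_edge; apply: (subsetP hM.1).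
  rewrite sum_nat_const cM => H; have := cardsC (cover M); rewrite card_T -H.
  move: (#|~: cover M|) => c H2; clear -H2; rewrite ?plusE; lia.
have sub : S M \subset [set x.1 | x in ~: cover M].
  apply/subsetP => i; rewrite inE => /(uncov hM) [x [hx <-]].
  by apply: imset_f; rewrite inE.
rewrite -cov2; apply: leq_trans (subset_leq_card sub) _; exact: leq_imset_card.
Qed.

Lemma edge_loc i p q : locn p q -> [set (i, p); (i, q)] \in edges ee.
Proof.
move=> h; rewrite inE; apply/existsP; exists (i, p); apply/existsP; exists (i, q).
by rewrite eqxx andbT /ee /= eqxx h.
Qed.

Lemma lower (F : {set {set {set T}}}) : (forall M, M \in F -> kmatching ee (3 * K).-1 M) ->
  \bigcup_(M in F) M = edges ee -> K <= #|F|.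
Proof.
move=> hF hU.
have memF : forall E, E \in edges ee -> exists2 M, M \in F & E \in M.
  by move=> E; rewrite -hU => /bigcupP[M hM hE]; exists M.
have two : forall i : 'I_K, 2 <= #|[set M in F | i \in S M]|.
  move=> i.
  have [M1 hM1 e1] := memF _ (@edge_loc i Vv Aa isT).
  have [M2 hM2 e2] := memF _ (@edge_loc i Vv Bb isT).
  have ne : M1 != M2.
    apply/eqP => E; subst M2.
    apply: (conflict (hF _ hM1).1 e1 e2 (z := (i, Vv))); rewrite ?inE ?eqxx //.
    apply/eqP => /setP/(_ (i, Aa)); rewrite !inE !xpair_eqE !eqxx.
    by [].
  have c2 : #|[set M1; M2]| = 2 by rewrite cards2 ne.
  rewrite -c2; apply: subset_leq_card.
  apply/subsetP => M; rewrite !inE => /orP[/eqP->|/eqP->].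
    by rewrite hM1 e1.
  by rewrite hM2 e2 orbT.
have cnt : forall i : 'I_K, #|[set M in F | i \in S M]| = \sum_(M in F) (i \in S M).
  move=> i; rewrite -sum1_card big_mkcond [RHS]big_mkcond /=.
  by apply: eq_bigr => M _; rewrite inE; case: (M \in F); case: (i \in S M).
have cnt2 : forall M, #|S M| = \sum_(i : 'I_K) (i \in S M).
  move=> M; rewrite -sum1_card big_mkcond /=.
  by apply: eq_bigr => i _; case: (i \in S M).
have H1 : \sum_(i : 'I_K) 2 <= \sum_(M in F) 2.
  apply: (@leq_trans (\sum_(i : 'I_K) #|[set M in F | i \in S M]|)).
    by apply: leq_sum => i _; apply: two.
  rewrite (eq_bigr _ (fun i _ => cnt i)) exchange_big /=.
  apply: leq_sum => M hM; rewrite -cnt2; apply: card_S; exact: hF.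
move: H1; rewrite sum_nat_const -[\sum_(i : 'I_K) 2]/(\sum_(i in 'I_K) 2) sum_nat_const card_ord.
by rewrite leq_pmul2r.
Qed.
End G.

Theorem proposition2 (m : nat) (hm : 3 <= m) :
  exists (T : finType) (e : rel T) (n : nat),
    simple_graph e /\ cubic e /\ connected_graph e /\ #|T| = (2 * n)%N /\
    every_edge_in_kmatching e n.-1 /\ excessive_index_ge e n.-1 m.
Proof.
have hK : (m - 3).+3 = m by lia.
exists (T (m - 3)), (@ee (m - 3)), (3 * (m - 3).+3).
split; first by split; [exact: ee_sym | exact: ee_irr].
split; first exact: cubic_ee.
split; first exact: conn_ee.
split; first by rewrite (card_T (m - 3)); lia.
split; first exact: every_edge.
move=> F hF hU; apply: (leq_trans _ (lower hF hU)); by rewrite hK.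
Qed.
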